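(* Hadamard graphs are not distance magic; i.e., no Hadamard graph admits a distance magic labeling.
   Context: For a Hadamard matrix $H=(h_{ij})$ of order $m$ (an $m\times m$ matrix with entries $\pm1$ and $HH^T=mI$), the Hadamard graph has $4m$ vertices $r_i^{+},r_i^{-},c_j^{+},c_j^{-}$ ($1\le i,j\le m$), where $r_i^{+}\sim c_j^{+}$ and $r_i^{-}\sim c_j^{-}$ if $h_{ij}=1$, and $r_i^{+}\sim c_j^{-}$ and $r_i^{-}\sim c_j^{+}$ if $h_{ij}=-1$. A distance magic labeling of a graph $G$ of order $N$ is a bijection $f:V(G)\to\{1,\dots,N\}$ such that $\sum_{y\in N(x)}f(y)$ is the same for every vertex $x$, where $N(x)$ is the open neighborhood of $x$. *)

(* Defs.v *)
From HB Require Import structures.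
From mathcomp Require Import all_boot all_order all_algebra.
Set Implicit Arguments. Unset Strict Implicit. Unset Printing Implicit Defensive.
Import GRing.Theory Num.Theory.
Local Open Scope ring_scope.

Definition is_hadamard (m : nat) (H : 'M[int]_m) : Prop :=
  (forall i j, H i j = 1 \/ H i j = -1) /\ H *m H^T = (m%:R)%:M.

(* Vertices of the Hadamard graph: (is_row, is_plus, index).
   (true, true, i) = r_i^+, (true, false, i) = r_i^-,
   (false, true, j) = c_j^+, (false, false, j) = c_j^-. *)
Definition hvert (m : nat) : finType := (bool * bool * 'I_m)%type.

Definition hadamard_adj (m : nat) (H : 'M[int]_m) : rel (hvert m) :=
  fun x y =>
    let: (rx, sx, i) := x in
    let: (ry, sy, j) := y in
    (rx != ry) &&
    ((if rx then H i j else H j i) == if sx == sy then 1 else -1).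

(* Distance magic labeling: a bijection f : V -> {1,..,N} (N = |V|),
   given as an injective map with values in [1, N], such that the sum of
   labels over the open neighbourhood is constant. *)
Definition distance_magic (T : finType) (adj : rel T) : Prop :=
  exists f : T -> nat,
    [/\ injective f,
        (forall x, 1 <= f x <= #|T|)%N &
        exists k : nat, forall x, (\sum_(y | adj x y) f y)%N = k].

(* Main.v *)
Require Import Defs.
From mathcomp Require Import all_boot all_order all_algebra.
Import GRing.Theory Num.Theory.
Local Open Scope ring_scope.

Lemma sum_hvert (m : nat) (G : hvert m -> int) :
  (\sum_(y : hvert m) G y =
   \sum_(i < m) (G (true,true,i) + G (true,false,i) + G (false,true,i) + G (false,false,i)))%R.
Proof.
have E1 := @pair_bigA _ 0%R (@GRing.add int) _ _ (fun (p : bool * bool) (i : 'I_m) => G (p, i)).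
have E2 := @pair_bigA _ 0%R (@GRing.add int) _ _ (fun (a b : bool) => \sum_(i < m) G (a, b, i))%R.
have -> : (\sum_(y : hvert m) G y = \sum_(p : bool * bool) \sum_(i < m) G (p, i))%R.
  rewrite E1; by apply: eq_bigr => -[].
have -> : (\sum_(p : bool * bool) \sum_(i < m) G (p, i) = \sum_(a : bool) \sum_(b : bool) \sum_(i < m) G (a, b, i))%R.
  rewrite E2; by apply: eq_bigr => -[].
rewrite !big_bool /= -!big_split /=.
by apply: eq_bigr => i _; rewrite !addrA.
Qed.

Lemma key (m : nat) (H : 'M[int]_m) (f : hvert m -> nat) (j : 'I_m) :
  (forall i j, H i j = 1 \/ H i j = -1)%R ->
  ((\sum_(y | hadamard_adj H (false,true,j) y) f y)%:Z -
   (\sum_(y | hadamard_adj H (false,false,j) y) f y)%:Z =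
   \sum_(i < m) H i j * ((f (true,true,i))%:Z - (f (true,false,i))%:Z))%R.
Proof.
move=> Hpm.
rewrite !(big_morph Posz PoszD (erefl 0%:Z)) (big_mkcond (hadamard_adj H _)).
rewrite (big_mkcond (hadamard_adj H (false,false,j))) -sumrB sum_hvert.
apply: eq_bigr => i _ /=.
case: (Hpm i j) => ->; rewrite /= ?subr0 ?sub0r ?addr0 ?add0r ?mul1r ?mulN1r ?opprB //=.
by rewrite addrC.
Qed.

Theorem corollary2p8 (m : nat) (H : 'M[int]_m) :
  (0 < m)%N -> is_hadamard H -> ~ distance_magic (hadamard_adj H).
Proof.
move=> m0 [Hpm HH] [f [finj _ [k Hk]]].
pose E : 'rV[int]_m := \row_i ((f (true,true,i))%:Z - (f (true,false,i))%:Z)%R.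
have EH : (E *m H = 0)%R.
  apply/rowP => j; rewrite !mxE.
  rewrite -[RHS](subrr (k%:Z)) -{1}(Hk (false,true,j)) -(Hk (false,false,j)) key //.
  by apply: eq_bigr => i _; rewrite mxE mulrC.
have E0 : (m%:R *: E = 0)%R by rewrite -mul_mx_scalar -HH mulmxA EH mul0mx.
pose i0 : 'I_m := Ordinal m0.
have : (m%:R *: E) 0 i0 = 0%R by rewrite E0 mxE.
rewrite !mxE => /eqP; rewrite mulf_eq0 pnatr_eq0 (negbTE (lt0n_neq0 m0)) /= subr_eq0 => /eqP.
by move=> [] /finj.
Qed.
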